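(* Let $N\ge1$, $0<\alpha\le2$, $Y_0\in\mathrm{Herm}(N)$ and $\Sigma$ an $N^2\times N^2$ Hermitian positive definite matrix, and let $Y\in\mathrm{Herm}(N)$ be a random matrix with characteristic function $$\mathbb E[\exp(i\mathrm{Tr}\,YS)]=\exp\Big[-\Big(\sum_{a,b,c,d=1}^N\Sigma_{ab,cd}S_{ab}S_{cd}^*\Big)^{\alpha/2}+i\mathrm{Tr}\,Y_0S\Big],\quad S\in\mathrm{Herm}(N).$$ Assume $Y$ is invariant, i.e. $UYU^\dagger\overset d=Y$ for all $U\in\mathrm U(N)$. Then there are constants $\sigma>0$ and $\kappa>-\sigma^2/N$ such that $\Sigma_{ab,cd}=\frac{\sigma^2}{\alpha}\delta_{ac}\delta_{bd}+\frac{\kappa}{\alpha}\delta_{ab}\delta_{cd}$, equivalently $\sum_{a,b,c,d}\Sigma_{ab,cd}S_{ab}S^*_{cd}=\sigma^2\mathrm{Tr}\,S^2/\alpha+\kappa(\mathrm{Tr}\,S)^2/\alpha$, and $Y_0=y_0I_N$ for some $y_0\in\mathbb R$.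
   Context: $\mathrm{Herm}(N)$: $N\times N$ Hermitian matrices; $\delta$ is the Kronecker delta; $S^*_{cd}$ is the complex conjugate of $S_{cd}$. *)

(* Defs.v *)
From HB Require Import structures.
From mathcomp Require Import all_boot all_order all_algebra.
From mathcomp Require Import all_classical all_reals all_analysis.
From mathcomp Require Import complex.

Set Implicit Arguments.
Unset Strict Implicit.
Unset Printing Implicit Defensive.

Import Order.TTheory GRing.Theory Num.Theory.
Local Open Scope ring_scope.
Local Open Scope classical_set_scope.
Local Open Scope complex_scope.

Section Defs.
Variable R : realType.
Local Notation C := (R[i]).

Definition adjmx m n (M : 'M[C]_(m, n)) : 'M[C]_(n, m) := (map_mx (@conjc R) M)^T.

Definition herm_mx n (M : 'M[C]_n) : Prop := adjmx M = M.

Definition unitary_mx n (U : 'M[C]_n) : Prop := U *m adjmx U = 1%:M.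

(* Hermitian positive definite (complex order: 0 < z forces z real) *)
Definition herm_posdef n (A : 'M[C]_n) : Prop :=
  herm_mx A /\ forall v : 'cV[C]_n, v != 0 -> 0 < (adjmx v *m A *m v) 0 0.

(* Borel sigma-algebra on N x N complex matrices, i.e. on R^(2N^2):
   generated by the real and imaginary parts of the entries. *)
Definition entry_sets N : set (set 'M[C]_N) :=
  [set A | exists (i j : 'I_N) (B : set R), measurable B /\
      (A = [set M : 'M[C]_N | B (complex.Re (M i j))] \/ A = [set M : 'M[C]_N | B (complex.Im (M i j))])].

Definition mx_measurable N (A : set 'M[C]_N) : Prop := <<s (@entry_sets N) >> A.

Definition random_matrix d (Omega : measurableType d) N
  (Y : Omega -> 'M[C]_N) : Prop :=
  forall A, mx_measurable A -> measurable (Y @^-1` A).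

Definition eq_in_law d (Omega : measurableType d) (P : probability Omega R) N
  (Y Z : Omega -> 'M[C]_N) : Prop :=
  forall A, mx_measurable A -> P (Y @^-1` A) = P (Z @^-1` A).

(* characteristic function E[exp(i Tr(Y S))], for Hermitian-valued Y and
   Hermitian S (then Tr(Y S) is real) *)
Definition charfun d (Omega : measurableType d) (P : probability Omega R) N
  (Y : Omega -> 'M[C]_N) (S : 'M[C]_N) : C :=
  (Rintegral P setT (fun w => cos (complex.Re (\tr (Y w *m S)))))
  +i* (Rintegral P setT (fun w => sin (complex.Re (\tr (Y w *m S))))).

Definition sigma_form N (Sigma : 'M[C]_(N * N)) (S : 'M[C]_N) : C :=
  \sum_(a < N) \sum_(b < N) \sum_(c < N) \sum_(d < N)
     Sigma (mxvec_index a b) (mxvec_index c d) * S a b * conjc (S c d).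

(* exp[-(Q)^(alpha/2) + i Tr(Y0 S)] ; Q and Tr(Y0 S) are real for Hermitian S *)
Definition stable_charfun N (alpha : R) (Sigma : 'M[C]_(N * N)) (Y0 S : 'M[C]_N) : C :=
  let r := expR (- ((complex.Re (sigma_form Sigma S)) `^ (alpha / 2))) in
  let t := complex.Re (\tr (Y0 *m S)) in
  (r * cos t) +i* (r * sin t).

End Defs.

(* Main.v *)
Require Import Defs.
From HB Require Import structures.
From mathcomp Require Import all_boot all_order all_algebra.
From mathcomp Require Import all_classical all_reals all_analysis.
From mathcomp Require Import complex.
From mathcomp Require Import measurable_realfun.
From mathcomp Require Import ring lra.
From mathcomp Require Import fingroup perm.
Import Order.TTheory GRing.Theory Num.Theory.
Import numFieldNormedType.Exports.
Local Open Scope ring_scope.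
Local Open Scope classical_set_scope.
Local Open Scope complex_scope.

Definition MT (R : realType) N := 'M[R[i]]_N.
HB.instance Definition _ (R : realType) N := Choice.on (MT R N).
HB.instance Definition _ (R : realType) N := isPointed.Build (MT R N) 0.
Notation MS R N := (@g_sigma_algebraType (MT R N) (@entry_sets R N)).

Section Basic.
Variable R : realType.
Local Notation C := (R[i]).

Lemma adjmxM m n p (A : 'M[C]_(m, n)) (B : 'M[C]_(n, p)) :
  adjmx (A *m B) = adjmx B *m adjmx A.
Proof. by rewrite /adjmx map_mxM trmx_mul. Qed.

Lemma adjmxK m n (A : 'M[C]_(m, n)) : adjmx (adjmx A) = A.
Proof.
apply/matrixP => i j; rewrite /adjmx !mxE; exact: conjcK.
Qed.

Lemma unitary_adj n (U : 'M[C]_n) : unitary_mx U -> adjmx U *m U = 1%:M.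
Proof. by move=> hU; apply: mulmx1C. Qed.

Lemma unitary_adjU n (U : 'M[C]_n) : unitary_mx U -> unitary_mx (adjmx U).
Proof. by move=> hU; rewrite /unitary_mx adjmxK; exact: unitary_adj. Qed.

Lemma herm_conj n (U S : 'M[C]_n) : herm_mx S -> herm_mx (adjmx U *m S *m U).
Proof. by move=> hS; rewrite /herm_mx !adjmxM adjmxK hS mulmxA. Qed.

Lemma Re_mul (x y : C) : complex.Re (x * y) = complex.Re x * complex.Re y - complex.Im x * complex.Im y.
Proof. by case: x => a b; case: y => c e. Qed.

Lemma Im_mul (x y : C) : complex.Im (x * y) = complex.Re x * complex.Im y + complex.Im x * complex.Re y.
Proof. by case: x => a b; case: y => c e. Qed.

Lemma Re_sum I (r : seq I) (P : pred I) (F : I -> C) :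
  complex.Re (\sum_(i <- r | P i) F i) = \sum_(i <- r | P i) complex.Re (F i).
Proof. by elim/big_rec2: _ => // i y1 y2 _ <-; case: (F i); case: y2. Qed.

Lemma Im_sum I (r : seq I) (P : pred I) (F : I -> C) :
  complex.Im (\sum_(i <- r | P i) F i) = \sum_(i <- r | P i) complex.Im (F i).
Proof. by elim/big_rec2: _ => // i y1 y2 _ <-; case: (F i); case: y2. Qed.

End Basic.

Section Meas.
Variable R : realType.
Local Notation C := (R[i]).
Variable N : nat.

Definition cmeas (g : MS R N -> C) :=
  measurable_fun setT (fun M => complex.Re (g M)) /\
  measurable_fun setT (fun M => complex.Im (g M)).

Lemma cmeas_entry i j : cmeas (fun M => M i j).
Proof.
split => _ B mB; rewrite setTI; apply: sub_sigma_algebra; exists i, j, B;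
  split => //; [left|right]; by [].
Qed.

Lemma cmeas_sum I (r : seq I) (F : I -> MS R N -> C) :
  (forall i, cmeas (F i)) -> cmeas (fun M => \sum_(i <- r) F i M).
Proof.
move=> hF; split.
- under eq_fun do rewrite Re_sum.
  by apply: measurable_sum => i; case: (hF i).
- under eq_fun do rewrite Im_sum.
  by apply: measurable_sum => i; case: (hF i).
Qed.

Lemma cmeas_mull c g : cmeas g -> cmeas (fun M => c * g M).
Proof.
move=> [h1 h2]; split.
- under eq_fun do rewrite Re_mul.
  by apply: measurable_funB; apply: measurable_funM => //; exact: measurable_cst.
- under eq_fun do rewrite Im_mul.
  by apply: measurable_funD; apply: measurable_funM => //; exact: measurable_cst.
Qed.

Lemma cmeas_AMB (A B : 'M[C]_N) i j : cmeas (fun M => (A *m M *m B) i j).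
Proof.
have -> : (fun M : MS R N => (A *m M *m B) i j) =
   (fun M => \sum_(l < N) B l j * \sum_(k < N) A i k * M k l).
  apply: funext => M; rewrite !mxE; apply: eq_bigr => l _.
  by rewrite mxE mulrC.
apply: cmeas_sum => l; apply: cmeas_mull; apply: cmeas_sum => k.
apply: cmeas_mull; exact: cmeas_entry.
Qed.

Lemma meas_conj (A B : 'M[C]_N) :
  measurable_fun (setT : set (MS R N)) (fun M : MS R N => (A *m M *m B : MS R N)).
Proof.
apply: (@measurability _ _ (MS R N) (MS R N) setT _ (@entry_sets R N)); first by [].
move=> _ [D [i [j [E [mE [->|->]]]]] <-]; rewrite setTI.
- by case: (cmeas_AMB A B i j) => h _; have := h measurableT E mE; rewrite setTI => H; exact: H.
- by case: (cmeas_AMB A B i j) => _ h; have := h measurableT E mE; rewrite setTI => H; exact: H.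
Qed.

End Meas.

Lemma law_Rintegral (R : realType) d (Omega : measurableType d) (P : probability Omega R) N
  (Y1 Y2 : Omega -> 'M[R[i]]_N) (f : MS R N -> R) :
  random_matrix Y1 -> random_matrix Y2 -> eq_in_law P Y1 Y2 ->
  measurable_fun setT f -> (forall M, `|f M| <= 1) ->
  Rintegral P setT (fun w => f (Y1 w)) = Rintegral P setT (fun w => f (Y2 w)).
Proof.
move=> r1 r2 law mf fb.
have mY (Z : Omega -> 'M[R[i]]_N) : random_matrix Z -> measurable_fun setT (Z : Omega -> MS R N).
  by move=> rZ _ A mA; rewrite setTI; exact: rZ A mA.
have mfE : measurable_fun (setT : set (MS R N)) (EFin \o f : MS R N -> \bar R) by apply/measurable_EFinP.
have intZ (Z : Omega -> 'M[R[i]]_N) : random_matrix Z -> P.-integrable setT (EFin \o (f \o (Z : Omega -> MS R N))).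
  move=> rZ; apply: measurable_bounded_integrable => //.
  - by apply: (le_lt_trans (probability_le1 P measurableT)); rewrite ltry.
  - exact: measurableT_comp (mY _ rZ).
  - exists 1; split => // M M1 x _ /=; exact: le_trans (fb _) (ltW M1).
have E1 := integral_pushforward (mY _ r1) mfE (intZ _ r1) measurableT.
have E2 := integral_pushforward (mY _ r2) mfE (intZ _ r2) measurableT.
rewrite !preimage_setT in E1 E2.
rewrite /Rintegral; congr fine.
rewrite -E1 -E2.
apply: eq_measure_integral; [exact: mY _ r2|exact: mY _ r1|].
move=> h1 h2 B mB _; exact: law.
Qed.

Section Inv.
Variable R : realType.
Local Notation C := (R[i]).

Lemma meas_trRe N (S : 'M[C]_N) (h : R -> R) : continuous h ->
  measurable_fun (setT : set (MS R N)) (fun M : MS R N => h (complex.Re (\tr (M *m S)))).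
Proof.
move=> ch.
have -> : (fun M : MS R N => h (complex.Re (\tr (M *m S)))) =
   h \o (fun M : MS R N => \sum_(i < N) complex.Re ((1%:M *m M *m S) i i)).
  by apply: funext => M /=; rewrite mul1mx /mxtrace Re_sum.
apply: measurableT_comp; first exact: continuous_measurable_fun.
by apply: measurable_sum => i; case: (@cmeas_AMB R N 1%:M S i i).
Qed.

Lemma charfun_inv d (Omega : measurableType d) (P : probability Omega R) N
  (Y : Omega -> 'M[C]_N) (U S : 'M[C]_N) :
  random_matrix Y -> eq_in_law P (fun w => U *m Y w *m adjmx U) Y ->
  charfun P Y (adjmx U *m S *m U) = charfun P Y S.
Proof.
move=> rY law.
have rY1 : random_matrix (fun w => U *m Y w *m adjmx U).
  move=> A mA.
  have := @meas_conj R N U (adjmx U) measurableT A mA; rewrite setTI => H.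
  exact: (rY _ H).
have E w : \tr (Y w *m (adjmx U *m S *m U)) = \tr (U *m Y w *m adjmx U *m S).
  by rewrite -!mulmxA [RHS]mxtrace_mulC !mulmxA.
rewrite /charfun.
have -> : (fun w => cos (complex.Re (\tr (Y w *m (adjmx U *m S *m U))))) =
  (fun w => cos (complex.Re (\tr (U *m Y w *m adjmx U *m S)))).
  by apply: funext => w; rewrite E.
have -> : (fun w => sin (complex.Re (\tr (Y w *m (adjmx U *m S *m U))))) =
  (fun w => sin (complex.Re (\tr (U *m Y w *m adjmx U *m S)))).
  by apply: funext => w; rewrite E.
rewrite (@law_Rintegral R d Omega P N _ _ (fun M : MS R N => cos (complex.Re (\tr (M *m S)))) rY1 rY law).
- rewrite (@law_Rintegral R d Omega P N _ _ (fun M : MS R N => sin (complex.Re (\tr (M *m S)))) rY1 rY law) //.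
  + exact: meas_trRe (@continuous_sin R).
  + by move=> M; exact: sin_max.
- exact: meas_trRe (@continuous_cos R).
- by move=> M; exact: cos_max.
Qed.

End Inv.

Section Stable.
Variable R : realType.

Definition Fst (a q t : R) : R[i] :=
  (expR (- (q `^ a)) * cos t) +i* (expR (- (q `^ a)) * sin t).

Lemma polar_eq (r r' x y x' y' : R) : 0 < r -> 0 < r' ->
  x ^+ 2 + y ^+ 2 = 1 -> x' ^+ 2 + y' ^+ 2 = 1 ->
  (r * x) +i* (r * y) = (r' * x') +i* (r' * y') -> r = r' /\ x = x' /\ y = y'.
Proof.
move=> r0 r'0 h h' [e1 e2].
have hr : r ^+ 2 = r' ^+ 2.
  have -> : r ^+ 2 = (r * x) ^+ 2 + (r * y) ^+ 2.
    by rewrite !exprMn -mulrDr h mulr1.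
  by rewrite e1 e2 !exprMn -mulrDr h' mulr1.
have rr : r = r'.
  by apply/eqP; rewrite -(@eqrXn2 _ 2) // ?ltW // hr.
subst r'; split => //; split; apply: (mulfI (lt0r_neq0 r0)); by [].
Qed.
Arguments polar_eq {r r' x y x' y'}.

Lemma Fst_eq (a q q' t t' : R) : 0 < a -> 0 <= q -> 0 <= q' ->
  (forall l : R, Fst a (l ^+ 2 * q) (l * t) = Fst a (l ^+ 2 * q') (l * t')) ->
  q = q' /\ t = t'.
Proof.
move=> a0 q0 q'0 H.
have E l : cos (l * t) = cos (l * t') /\ sin (l * t) = sin (l * t').
  have [_ []] := polar_eq (expR_gt0 _) (expR_gt0 _)
     (cos2Dsin2 _) (cos2Dsin2 _) (H l).
  by [].
split.
- have [e _] := polar_eq (expR_gt0 _) (expR_gt0 _)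
     (cos2Dsin2 _) (cos2Dsin2 _) (H 1).
  move/expR_inj: e; rewrite expr1n !mul1r => /eqP; rewrite eqr_opp => /eqP.
  by apply: (powR_injective a0); rewrite qualifE /=.
- apply/eqP/negPn/negP => ne.
  have ne' : t - t' != 0 by rewrite subr_eq0.
  pose l := (pi / 2) / (t - t').
  have [ec es] := E l.
  have : sin (l * t - l * t') = 0.
    by rewrite sinB ec es mulrC subrr.
  by rewrite -mulrBr /l divfK // sin_pihalf => /eqP; rewrite oner_eq0.
Qed.

End Stable.

Section SigmaForm.
Variable R : realType.
Local Notation C := (R[i]).

Lemma big_mxvec N (F : 'I_(N * N) -> C) :
  \sum_x F x = \sum_(a < N) \sum_(b < N) F (mxvec_index a b).
Proof.
rewrite (reindex _ (curry_mxvec_bij N N)) /= pair_big /=.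
by apply: eq_bigr => -[a b] _.
Qed.

Lemma sigma_form_quad N (Sigma : 'M[C]_(N * N)) (S : 'M[C]_N) :
  let w := (mxvec (map_mx (@conjc R) S))^T in
  sigma_form Sigma S = (adjmx w *m Sigma *m w) 0 0.
Proof.
move=> w.
have -> : (adjmx w *m Sigma *m w) 0 0 =
   \sum_x \sum_y Sigma x y * conjc (w x 0) * w y 0.
  rewrite mxE exchange_big /=; apply: eq_bigr => y _.
  rewrite mxE mulr_suml; apply: eq_bigr => x _.
  by rewrite /adjmx !mxE (mulrC _ (Sigma x y)).
rewrite big_mxvec; apply: eq_bigr => a _; apply: eq_bigr => b _.
rewrite big_mxvec; apply: eq_bigr => c _; apply: eq_bigr => d _.
by rewrite /w !mxE !mxvecE !mxE conjcK.
Qed.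

Lemma sigma_form_pos N (Sigma : 'M[C]_(N * N)) (S : 'M[C]_N) :
  herm_posdef Sigma ->
  [/\ sigma_form Sigma S = (complex.Re (sigma_form Sigma S))%:C,
      0 <= complex.Re (sigma_form Sigma S) &
      S != 0 -> 0 < complex.Re (sigma_form Sigma S)].
Proof.
move=> [_ pd].
have [->|nS] := eqVneq S 0.
  have -> : sigma_form Sigma 0 = 0.
    by rewrite /sigma_form big1 // => a _; rewrite big1 // => b _; rewrite big1 // => c _;
      rewrite big1 // => d _; rewrite !mxE mulr0 mul0r.
  by split => //; rewrite eqxx.
have nw : (mxvec (map_mx (@conjc R) S))^T != 0.
  apply: contra nS => /eqP w0; apply/eqP/matrixP => a b.
  have := congr1 (fun M : 'cV[C]_(N * N) => M (mxvec_index a b) 0) w0.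
  rewrite !mxE mxvecE mxE => /eqP; rewrite conjc_eq0 => /eqP ->.
  by [].
have := pd _ nw; rewrite -sigma_form_quad ltcE /= => /andP[/eqP hI hR].
split => //; last exact: ltW.
by case: (sigma_form Sigma S) hI => x y /= ->.
Qed.

Lemma sigma_formZ N (Sigma : 'M[C]_(N * N)) (S : 'M[C]_N) (l : R) :
  sigma_form Sigma (l%:C *: S) = (l ^+ 2)%:C * sigma_form Sigma S.
Proof.
rewrite /sigma_form mulr_sumr; apply: eq_bigr => a _.
rewrite mulr_sumr; apply: eq_bigr => b _.
rewrite mulr_sumr; apply: eq_bigr => c _.
rewrite mulr_sumr; apply: eq_bigr => d _.
rewrite !mxE rmorphM /= oppr0 -[l +i* 0]/(l%:C) rmorphXn /=.
ring.
Qed.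

End SigmaForm.

Section QTinv.
Variable R : realType.
Local Notation C := (R[i]).

Lemma Re_realM (r : R) (z : C) : complex.Re (r%:C * z) = r * complex.Re z.
Proof. by case: z => x y /=; rewrite mul0r subr0. Qed.

Lemma conjc_realC (r : R) : conjc (r%:C) = r%:C :> C.
Proof. by rewrite /= oppr0. Qed.

Lemma adjmxZ m n (l : R) (A : 'M[C]_(m, n)) : adjmx (l%:C *: A) = l%:C *: adjmx A.
Proof. by apply/matrixP => i j; rewrite /adjmx !mxE rmorphM /= oppr0. Qed.

Lemma hermZ n (l : R) (S : 'M[C]_n) : herm_mx S -> herm_mx (l%:C *: S).
Proof. by move=> hS; rewrite /herm_mx adjmxZ hS. Qed.

Variables (N : nat) (alpha : R) (Sigma : 'M[C]_(N * N)) (Y0 : 'M[C]_N).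
Hypothesis a0 : 0 < alpha.
Hypothesis pd : herm_posdef Sigma.
Hypothesis Hinv : forall U S : 'M[C]_N, unitary_mx U -> herm_mx S ->
  stable_charfun alpha Sigma Y0 (adjmx U *m S *m U) = stable_charfun alpha Sigma Y0 S.

Definition Qf (S : 'M[C]_N) := complex.Re (sigma_form Sigma S).
Definition Tf (S : 'M[C]_N) := complex.Re (\tr (Y0 *m S)).

Lemma QfZ l S : Qf (l%:C *: S) = l ^+ 2 * Qf S.
Proof. by rewrite /Qf sigma_formZ Re_realM. Qed.

Lemma TfZ l S : Tf (l%:C *: S) = l * Tf S.
Proof. by rewrite /Tf -scalemxAr mxtraceZ Re_realM. Qed.

Lemma QT_inv U S : unitary_mx U -> herm_mx S ->
  Qf (adjmx U *m S *m U) = Qf S /\ Tf (adjmx U *m S *m U) = Tf S.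
Proof.
move=> hU hS.
apply: (@Fst_eq R (alpha / 2)).
- by rewrite divr_gt0.
- by case: (@sigma_form_pos R N Sigma (adjmx U *m S *m U) pd).
- by case: (@sigma_form_pos R N Sigma S pd).
move=> l.
have := Hinv U (l%:C *: S) hU (@hermZ N l S hS).
rewrite /stable_charfun -scalemxAr -scalemxAl.
by rewrite -/(Qf _) -/(Qf _) -/(Tf _) -/(Tf _) !QfZ !TfZ.
Qed.

End QTinv.

Section Scalar.
Variable R : realType.
Local Notation C := (R[i]).

Lemma perm_unitary n (s : 'S_n) : unitary_mx (perm_mx s : 'M[C]_n).
Proof.
by rewrite /unitary_mx /adjmx map_perm_mx tr_perm_mx -perm_mxM mulgV perm_mx1.
Qed.

Lemma perm_conjE n (s : 'S_n) (A : 'M[C]_n) :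
  perm_mx s *m A *m adjmx (perm_mx s) = \matrix_(a, b) A (s a) (s b).
Proof.
rewrite /adjmx map_perm_mx tr_perm_mx -row_permE -col_permE.
by apply/matrixP => a b; rewrite !mxE.
Qed.

Definition sgnv {n} (k : 'I_n) : 'rV[C]_n := \row_i (if i == k then -1 else 1).

Lemma adj_sgn n (k : 'I_n) : adjmx (diag_mx (sgnv k)) = diag_mx (sgnv k).
Proof.
rewrite /adjmx map_diag_mx tr_diag_mx; congr diag_mx; apply/rowP => i.
by rewrite !mxE; case: ifP => _; rewrite ?rmorphN rmorph1.
Qed.

Lemma sgn_unitary n (k : 'I_n) : unitary_mx (diag_mx (sgnv k)).
Proof.
rewrite /unitary_mx adj_sgn mulmx_diag; apply/matrixP => i j.
rewrite !mxE; case: ifP => _; by rewrite ?mulrNN mulr1.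
Qed.

Lemma sgn_conjE n (k : 'I_n) (A : 'M[C]_n) i j :
  (diag_mx (sgnv k) *m A *m adjmx (diag_mx (sgnv k))) i j =
  (sgnv k) 0 i * A i j * (sgnv k) 0 j.
Proof. by rewrite adj_sgn mul_mx_diag mxE mul_diag_mx !mxE. Qed.

Lemma scalar_of_inv N (Y0 : 'M[C]_N) : (0 < N)%N -> herm_mx Y0 ->
  (forall U, unitary_mx U -> U *m Y0 *m adjmx U = Y0) ->
  exists y0 : R, Y0 = (y0%:C)%:M.
Proof.
move=> N0 hY H.
pose i0 := Ordinal N0.
have offd i j : i != j -> Y0 i j = 0.
  move=> nij.
  have := congr1 (fun M : 'M[C]_N => M i j) (H _ (sgn_unitary _ i)).
  rewrite /= sgn_conjE !mxE eqxx eq_sym (negbTE nij).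
  rewrite mulr1 mulN1r => /eqP; rewrite eqr_oppLR -subr_eq0 opprK -mulr2n.
  by rewrite mulrn_eq0 /= => /eqP.
have diag i : Y0 i i = Y0 i0 i0.
  have := congr1 (fun M : 'M[C]_N => M i0 i0) (H _ (perm_unitary _ (perm.tperm i0 i))).
  by rewrite perm_conjE mxE perm.tpermL.
have hr : Y0 i0 i0 = (complex.Re (Y0 i0 i0))%:C.
  have := congr1 (fun M : 'M[C]_N => M i0 i0) hY.
  rewrite /adjmx !mxE.
  case: (Y0 i0 i0) => x y /= [] /eqP.
  rewrite eqr_oppLR -subr_eq0 opprK -mulr2n mulrn_eq0 /= => /eqP ->.
  by [].

exists (complex.Re (Y0 i0 i0)); rewrite -hr.
apply/matrixP => i j; rewrite !mxE.
have [<-|nij] := eqVneq i j; first by rewrite diag mulr1n.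
by rewrite offd // mulr0n.
Qed.

End Scalar.

Section Commute.
Variable R : realType.
Local Notation C := (R[i]).

Lemma herm_entry {n} {M : 'M[C]_n} i j : herm_mx M -> M i j = conjc (M j i).
Proof. by move=> hM; rewrite -{1}hM /adjmx !mxE. Qed.

Lemma Re_sub (x y : C) : complex.Re (x - y) = complex.Re x - complex.Re y.
Proof. by case: x; case: y. Qed.

Lemma Re_mulJ (z : C) : complex.Re (z * conjc z) = complex.Re z ^+ 2 + complex.Im z ^+ 2.
Proof. by case: z => x y /=; rewrite mulrN opprK !expr2. Qed.

Lemma trsq_zero {n} {M : 'M[C]_n} : herm_mx M -> complex.Re (\tr (M *m M)) = 0 -> M = 0.
Proof.
move=> hM h0; apply/matrixP => i j; rewrite mxE.
have E : complex.Re (\tr (M *m M)) =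
   \sum_i \sum_j (complex.Re (M i j) ^+ 2 + complex.Im (M i j) ^+ 2).
  rewrite /mxtrace Re_sum; apply: eq_bigr => a _.
  rewrite mxE Re_sum; apply: eq_bigr => b _.
  by rewrite [M b a](herm_entry b a hM) Re_mulJ.
have ge0 (z : C) : 0 <= complex.Re z ^+ 2 + complex.Im z ^+ 2.
  by rewrite addr_ge0 // sqr_ge0.
rewrite E in h0.
have := psumr_eq0P (fun a _ => sumr_ge0 _ (fun b _ => ge0 (M a b))) h0 (i := i) isT.
move/psumr_eq0P => /(_ (fun b _ => ge0 (M i b)) j isT) /eqP.
rewrite paddr_eq0 ?sqr_ge0 // !sqrf_eq0 => /andP[/eqP hr /eqP hi].
by case: (M i j) hr hi => x y /= -> ->.
Qed.

Lemma commute_of_T N (Y0 : 'M[C]_N) : herm_mx Y0 ->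
  (forall U S : 'M[C]_N, unitary_mx U -> herm_mx S ->
     complex.Re (\tr (Y0 *m (adjmx U *m S *m U))) = complex.Re (\tr (Y0 *m S))) ->
  forall U, unitary_mx U -> U *m Y0 *m adjmx U = Y0.
Proof.
move=> hY HT U hU.
pose M := U *m Y0 *m adjmx U - Y0.
have hM : herm_mx M.
  have h1 : adjmx (U *m Y0 *m adjmx U) = U *m Y0 *m adjmx U.
    by rewrite !adjmxM adjmxK hY mulmxA.
  have adjB (A B : 'M[C]_N) : adjmx (A - B) = adjmx A - adjmx B.
    by apply/matrixP => i j; rewrite /adjmx !mxE rmorphB.
  by rewrite /herm_mx /M adjB h1 hY.
have E S : herm_mx S -> complex.Re (\tr (M *m S)) = 0.
  move=> hS; rewrite /M mulmxBl linearB Re_sub -(HT U S hU hS).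
  by rewrite -!mulmxA [X in complex.Re X - _]mxtrace_mulC !mulmxA subrr.
apply/eqP; rewrite -subr_eq0; apply/eqP.
exact: (trsq_zero hM (E _ hM)).
Qed.

End Commute.

Section Diag.
Variable R : realType.
Local Notation C := (R[i]).
Variables (N : nat) (Sigma : 'M[C]_(N * N)).

Lemma sigma_form_diag (S : 'M[C]_N) : (forall i j, i != j -> S i j = 0) ->
  sigma_form Sigma S = \sum_(a < N) \sum_(c < N)
     Sigma (mxvec_index a a) (mxvec_index c c) * S a a * conjc (S c c).
Proof.
move=> hS; rewrite /sigma_form; apply: eq_bigr => a _.
rewrite [LHS](bigD1 a) //= [X in _ + X]big1 ?addr0 => [|b nb]; last first.
  rewrite big1 // => c _; rewrite big1 // => d _.
  by rewrite (hS a b) ?mulr0 ?mul0r // eq_sym.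
apply: eq_bigr => c _.
rewrite [LHS](bigD1 c) //= [X in _ + X]big1 ?addr0 // => d nd.
by rewrite (hS c d) ?rmorph0 ?mulr0 // eq_sym.
Qed.

Definition dmx (x : 'rV[R]_N) : 'M[C]_N := diag_mx (map_mx (real_complex R) x).

Definition mm (a c : 'I_N) := complex.Re (Sigma (mxvec_index a a) (mxvec_index c c)).

Lemma Q_dmx x : complex.Re (sigma_form Sigma (dmx x)) =
  \sum_(a < N) \sum_(c < N) mm a c * x 0 a * x 0 c.
Proof.
rewrite sigma_form_diag => [|i j nij]; last by rewrite /dmx mxE (negbTE nij) mulr0n.
rewrite Re_sum; apply: eq_bigr => a _; rewrite Re_sum; apply: eq_bigr => c _.
rewrite /dmx !mxE !eqxx !mulr1n conjc_realC.
by rewrite -mulrA -rmorphM /= mulrC Re_realM mulrC /mm mulrA.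
Qed.

Lemma herm_dmx x : herm_mx (dmx x).
Proof.
apply/matrixP => i j; rewrite /adjmx /dmx !mxE.
have [<-|nij] := eqVneq i j; first by rewrite !mulr1n conjc_realC.
by rewrite !mulr0n rmorph0.
Qed.

Lemma dmx_perm x (s : 'S_N) :
  \matrix_(a, b) (dmx x) (s a) (s b) = dmx (\row_i x 0 (s i)).
Proof.
apply/matrixP => a b; rewrite /dmx !mxE.
by rewrite (inj_eq perm_inj).
Qed.

Lemma dmx_eq0 x : dmx x = 0 -> x = 0.
Proof.
move=> h; apply/rowP => i.
have := congr1 (fun M : 'M[C]_N => M i i) h.
by rewrite /dmx !mxE eqxx mulr1n => -[].
Qed.

End Diag.

Section Struct.
Variable R : realType.
Variables (N : nat) (mm : 'I_N -> 'I_N -> R).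

Definition Bf (x y : 'rV[R]_N) := \sum_(a < N) \sum_(c < N) mm a c * x 0 a * y 0 c.

Hypothesis Hq : forall (x : 'rV[R]_N) (s : 'S_N),
  Bf (\row_i x 0 (s i)) (\row_i x 0 (s i)) = Bf x x.
Hypothesis Hpos : forall x : 'rV[R]_N, x != 0 -> 0 < Bf x x.

Definition ev (a : 'I_N) : 'rV[R]_N := \row_i (i == a)%:R.

Lemma BfDl x y z : Bf (x + y) z = Bf x z + Bf y z.
Proof.
rewrite /Bf -big_split; apply: eq_bigr => a _; rewrite -big_split.
by apply: eq_bigr => c _; rewrite !mxE /=; ring.
Qed.

Lemma BfDr x y z : Bf z (x + y) = Bf z x + Bf z y.
Proof.
rewrite /Bf -big_split; apply: eq_bigr => a _; rewrite -big_split.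
by apply: eq_bigr => c _; rewrite !mxE /=; ring.
Qed.

Lemma BfNl x z : Bf (- x) z = - Bf x z.
Proof.
rewrite /Bf -sumrN; apply: eq_bigr => a _; rewrite -sumrN.
by apply: eq_bigr => c _; rewrite !mxE /=; ring.
Qed.

Lemma BfNr x z : Bf z (- x) = - Bf z x.
Proof.
rewrite /Bf -sumrN; apply: eq_bigr => a _; rewrite -sumrN.
by apply: eq_bigr => c _; rewrite !mxE /=; ring.
Qed.

Lemma sum_delta (F : 'I_N -> R) b : \sum_(i < N) F i * (i == b)%:R = F b.
Proof.
rewrite (bigD1 b) //= eqxx mulr1 big1 ?addr0 // => i /negbTE ->.
by rewrite mulr0.
Qed.

Lemma Bf_ev a c : Bf (ev a) (ev c) = mm a c.
Proof.
rewrite /Bf.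
under eq_bigr do under eq_bigr do rewrite !mxE.
under eq_bigr do rewrite sum_delta.
rewrite (bigD1 a) //= eqxx mulr1 big1 ?addr0 // => i /negbTE ->.
by rewrite mulr0.
Qed.

Lemma ev_perm (s : 'S_N) b : \row_i (ev (s b)) 0 (s i) = ev b.
Proof. by apply/rowP => i; rewrite !mxE !(inj_eq perm_inj). Qed.

Lemma ev_perm2 (s : 'S_N) b b' :
  \row_i (ev (s b) + ev (s b')) 0 (s i) = ev b + ev b'.
Proof. by apply/rowP => i; rewrite !mxE !(inj_eq perm_inj). Qed.

Lemma mm_diag a i0 : mm a a = mm i0 i0.
Proof.
have := Hq (ev (perm.tperm i0 a i0)) (perm.tperm i0 a).
by rewrite ev_perm perm.tpermL !Bf_ev.
Qed.

Lemma two_perm {a c i0 i1 : 'I_N} : a != c -> i0 != i1 ->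
  exists s : 'S_N, s i0 = a /\ s i1 = c.
Proof.
move=> nac n01.
pose t1 := perm.tperm i0 a.
exists (t1 * perm.tperm (t1 i1) c)%g; rewrite !perm.permM perm.tpermL.
split => //.
apply: perm.tpermD; last by rewrite eq_sym.
by rewrite -[X in _ != X](perm.tpermL i0 a) (inj_eq perm_inj) eq_sym.
by rewrite perm.tpermL.
Qed.

Lemma mm_off a c i0 i1 : a != c -> i0 != i1 ->
  mm a c + mm c a = mm i0 i1 + mm i1 i0.
Proof.
move=> nac n01; have [s [s0 s1]] := two_perm nac n01.
have := Hq (ev (s i0) + ev (s i1)) s.
rewrite ev_perm2 s0 s1 !BfDl !BfDr !Bf_ev.
rewrite (mm_diag a i0) (mm_diag c i0) (mm_diag i1 i0) => h.
lra.
Qed.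


Lemma Bf_formula p0 r0 :
  (forall a c, mm a c + mm c a = 2 * (r0 + (p0 - r0) * (a == c)%:R)) ->
  forall x, Bf x x = (p0 - r0) * \sum_(a < N) x 0 a ^+ 2 + r0 * (\sum_(a < N) x 0 a) ^+ 2.
Proof.
move=> hK x.
have E : \sum_(a < N) \sum_(c < N) mm c a * x 0 a * x 0 c = Bf x x.
  rewrite /Bf exchange_big /=; apply: eq_bigr => c _; apply: eq_bigr => a _.
  by rewrite mulrAC.
have E2 : Bf x x + Bf x x = \sum_(a < N) \sum_(c < N)
     (2 * (r0 + (p0 - r0) * (a == c)%:R)) * x 0 a * x 0 c.
  rewrite -{2}E /Bf -big_split; apply: eq_bigr => a _; rewrite -big_split.
  by apply: eq_bigr => c _; rewrite -hK /=; ring.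
have E3 : \sum_(a < N) \sum_(c < N) (2 * (r0 + (p0 - r0) * (a == c)%:R)) * x 0 a * x 0 c
   = 2 * ((p0 - r0) * \sum_(a < N) x 0 a ^+ 2 + r0 * (\sum_(a < N) x 0 a) ^+ 2).
  have S1 : (\sum_(a < N) x 0 a) ^+ 2 = \sum_(a < N) \sum_(c < N) x 0 a * x 0 c.
    by rewrite expr2 mulr_suml; apply: eq_bigr => a _; rewrite mulr_sumr.
  have S2 : \sum_(a < N) x 0 a ^+ 2 = \sum_(a < N) \sum_(c < N) (a == c)%:R * x 0 a * x 0 c.
    apply: eq_bigr => a _; rewrite (bigD1 a) //= eqxx big1 ?addr0 => [|c /negbTE nc].
      by rewrite mul1r expr2.
    by rewrite eq_sym nc !mul0r.
  rewrite S1 S2 !mulr_sumr -big_split !mulr_sumr; apply: eq_bigr => a _.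
  rewrite !mulr_sumr -big_split !mulr_sumr; apply: eq_bigr => c _ /=; ring.
apply: (@mulfI _ 2); first by rewrite pnatr_eq0.
by rewrite -E3 -E2; ring.
Qed.

Hypothesis hN : (0 < N)%N.

Lemma Bf_struct : exists p r : R, [/\ 0 < p, 0 < p + N%:R * r &
  forall x, Bf x x = p * \sum_(a < N) x 0 a ^+ 2 + r * (\sum_(a < N) x 0 a) ^+ 2].
Proof.
pose i0 := Ordinal hN.
pose p0 := mm i0 i0.
have [r0 [hK hr h0]] : exists r0, [/\ (forall a c, mm a c + mm c a = 2 * (r0 + (p0 - r0) * (a == c)%:R)),
   ((1 < N)%N -> exists i1, i0 != i1 /\ mm i0 i1 + mm i1 i0 = 2 * r0) &
   ((N <= 1)%N -> r0 = 0)].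
  case: (ltnP 1 N) => h1.
  - pose i1 := Ordinal h1.
    have n01 : i0 != i1 by [].
    exists ((mm i0 i1 + mm i1 i0) / 2); split; last 2 first.
    + by move=> _; exists i1; split => //; rewrite mulrC divfK // pnatr_eq0.
    + by move=> hf; discriminate hf.
    move=> a c; have [<-|nac] := eqVneq a c.
      by rewrite mulr1 /p0 (mm_diag a i0); ring.
    rewrite mulr0 addr0 mulrC divfK ?pnatr_eq0 //.
    exact: mm_off.
  - exists 0; split => [a c| |//]; last by move=> hf; discriminate hf.
    have -> : a = c.
      have ha := leq_trans (ltn_ord a) h1; have hc := leq_trans (ltn_ord c) h1.
      by apply: val_inj; move: ha hc; rewrite !ltnS !leqn0 /= => /eqP -> /eqP.
    by rewrite eqxx mulr1 /p0 (mm_diag c i0); ring.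
have F := Bf_formula _ _ hK.
exists (p0 - r0), r0; split => //.
- case: (ltnP 1 N) => h1.
  + have [i1 [n01 h01]] := hr h1.
    have nz : ev i0 - ev i1 != 0.
      apply/eqP => /rowP /(_ i0); rewrite !mxE eqxx (negbTE n01) subr0 => /eqP.
      by rewrite oner_eq0.
    have := Hpos _ nz; rewrite BfDl !BfDr !BfNl !BfNr !Bf_ev /p0 (mm_diag i1 i0).
    by move=> h; lra.
  + have nz : ev i0 != 0.
      by apply/eqP => /rowP /(_ i0); rewrite !mxE eqxx => /eqP; rewrite oner_eq0.
    have := Hpos _ nz; rewrite Bf_ev -/p0.
    by rewrite (h0 h1) subr0.
- have nz : (const_mx 1 : 'rV[R]_N) != 0.
    by apply/eqP => /rowP /(_ i0); rewrite !mxE => /eqP; rewrite oner_eq0.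
  have := Hpos _ nz; rewrite F.
  under eq_bigr do rewrite mxE expr1n.
  under [X in _ + _ * X ^+ 2]eq_bigr do rewrite mxE.
  rewrite sumr_const card_ord.
  set n := (N%:R : R).
  have n0 : 0 < n by rewrite ltr0n.
  have e : (p0 - r0) * n + r0 * n ^+ 2 = n * (p0 - r0 + n * r0) by ring.
  by rewrite e pmulr_rgt0.
Qed.

End Struct.

Section Spec.
Local Open Scope sesquilinear_scope.
Variable R : realType.
Local Notation C := (R[i]).

Lemma herm_sym {n} {S : 'M[C]_n} : herm_mx S -> S \is hermsymmx.
Proof.
move=> hS; apply/is_hermitianmxP; rewrite expr0 scale1r -map_trmx.
by rewrite -[in LHS]hS.
Qed.

Lemma unitary_of n (P : 'M[C]_n) : P \is unitarymx -> unitary_mx P.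
Proof. by move/unitarymxP; rewrite /unitary_mx /adjmx map_trmx. Qed.

Lemma adj_of n (P : 'M[C]_n) : adjmx P = P ^t*.
Proof. by rewrite /adjmx map_trmx. Qed.

Lemma spectral_herm n (S : 'M[C]_n) : herm_mx S ->
  exists (U : 'M[C]_n) (x : 'rV[R]_n), [/\ unitary_mx U,
    adjmx U *m S *m U = diag_mx (map_mx (real_complex R) x),
    \tr (S *m S) = \sum_(a < n) ((x 0 a) ^+ 2)%:C &
    \tr S = \sum_(a < n) (x 0 a)%:C].
Proof.
move=> hS.
have hs := herm_sym hS.
have /orthomx_spectralP E := hermitian_normalmx hs.
have rl := hermitian_spectral_diag_real hs.
set P := spectralmx S in E; set sp := spectral_diag S in E rl.
have uP : P \is unitarymx by exact: spectral_unitarymx.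
have Pu : P \in unitmx by exact: unitarymx_unit.
pose x := map_mx (@complex.Re R) sp.
have Ex : map_mx (real_complex R) x = sp.
  apply/rowP => j; rewrite !mxE; apply: RRe_real.
  by move/mxOverP: rl => /(_ 0 j).
exists (adjmx P), x; rewrite Ex adjmxK; split.
- exact/unitary_adjU/unitary_of.
- rewrite adj_of -invmx_unitary // E !mulmxA mulmxV // mul1mx -mulmxA mulmxV //.
  by rewrite mulmx1.
- rewrite E !mulmxA -[_ *m P *m invmx P]mulmxA mulmxV // mulmx1.
  rewrite -!mulmxA mxtrace_mulC -!mulmxA mulmxV // mulmx1 mulmx_diag.
  rewrite /mxtrace; apply: eq_bigr => a _; rewrite !mxE eqxx mulr1n -Ex !mxE.
  by rewrite rmorphXn /= expr2.
- rewrite E -mulmxA mxtrace_mulC -mulmxA mulmxV // mulmx1.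
  by rewrite /mxtrace; apply: eq_bigr => a _; rewrite !mxE eqxx mulr1n -Ex !mxE.
Qed.

End Spec.

Theorem lemma4p3 (R : realType) (N : nat) (alpha : R)
  (Sigma : 'M[R[i]]_(N * N)) (Y0 : 'M[R[i]]_N)
  (d : measure_display) (Omega : measurableType d) (P : probability Omega R)
  (Y : Omega -> 'M[R[i]]_N) :
  (0 < N)%N ->
  0 < alpha <= 2 ->
  herm_mx Y0 ->
  herm_posdef Sigma ->
  random_matrix Y ->
  (forall w, herm_mx (Y w)) ->
  (forall S : 'M[R[i]]_N, herm_mx S ->
     charfun P Y S = stable_charfun alpha Sigma Y0 S) ->
  (forall U : 'M[R[i]]_N, unitary_mx U ->
     eq_in_law P (fun w => U *m Y w *m adjmx U) Y) ->
  (exists sigma kappa : R, 0 < sigma /\ - sigma ^+ 2 / N%:R < kappa /\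
     forall S : 'M[R[i]]_N, herm_mx S ->
       sigma_form Sigma S =
         ((sigma ^+ 2 / alpha)%:C * \tr (S *m S)
          + (kappa / alpha)%:C * (\tr S) ^+ 2)%R) /\
  (exists y0 : R, Y0 = (y0%:C)%:M).
Proof.
move=> hN /andP[a0 a2] hY0 pd rY hYw Hchar Hlaw.
have Hinv : forall U S : 'M[R[i]]_N, unitary_mx U -> herm_mx S ->
    stable_charfun alpha Sigma Y0 (adjmx U *m S *m U) = stable_charfun alpha Sigma Y0 S.
  move=> U S hU hS.
  rewrite -(Hchar _ (herm_conj R N U S hS)) -(Hchar _ hS).
  exact: (charfun_inv R d Omega P N Y U S rY (Hlaw U hU)).
have QT := QT_inv R N alpha Sigma Y0 a0 pd Hinv.
split; last first.
  apply: (scalar_of_inv R N Y0 hN hY0).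
  apply: (commute_of_T R N Y0 hY0) => U S hU hS.
  exact: (QT U S hU hS).2.
pose mmS := mm R N Sigma.
have HQ U S : unitary_mx U -> herm_mx S ->
    complex.Re (sigma_form Sigma (adjmx U *m S *m U)) = complex.Re (sigma_form Sigma S).
  by move=> hU hS; exact: (QT U S hU hS).1.
have Bq x : Bf R N mmS x x = complex.Re (sigma_form Sigma (dmx R N x)) by rewrite Q_dmx.
have Hq : forall (x : 'rV[R]_N) (s : 'S_N),
    Bf R N mmS (\row_i x 0 (s i)) (\row_i x 0 (s i)) = Bf R N mmS x x.
  move=> x s; rewrite !Bq -dmx_perm -perm_conjE.
  have := HQ (adjmx (perm_mx s)) (dmx R N x) (unitary_adjU R N _ (perm_unitary R N s)) (herm_dmx R N x).
  by rewrite adjmxK.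
have Hpos : forall x : 'rV[R]_N, x != 0 -> 0 < Bf R N mmS x x.
  move=> x nx; rewrite Bq; case: (sigma_form_pos R N Sigma (dmx R N x) pd) => _ _; apply.
  by apply: contra nx => /eqP /(dmx_eq0 R N x) ->.
have [p [r [p0 pr Hf]]] := Bf_struct R N mmS Hq Hpos hN.
have ap0 : 0 <= alpha * p by rewrite mulr_ge0 // ltW.
have an0 : alpha != 0 by rewrite gt_eqF.
exists (Num.sqrt (alpha * p)), (alpha * r).
split; first by rewrite sqrtr_gt0 mulr_gt0.
rewrite sqr_sqrtr //; split.
  have n0 : 0 < (N%:R : R) by rewrite ltr0n.
  have e : alpha * r - (- (alpha * p) / N%:R) = alpha * (p + N%:R * r) / N%:R.
    by field; rewrite gt_eqF.
  by rewrite -subr_gt0 e divr_gt0 // mulr_gt0.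
move=> S hS.
have [U [x [hU E trSS trS]]] := spectral_herm R N S hS.
case: (sigma_form_pos R N Sigma S pd) => -> _ _.
rewrite -(HQ U S hU hS) E -/(dmx R N x) -Bq Hf trSS trS.
have e1 : alpha * p / alpha = p by field.
have e2 : alpha * r / alpha = r by field.
rewrite e1 e2 rmorphD !rmorphM /= !rmorph_sum expr2.
by [].
Qed.
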